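(* Let $(a^*,b^* )$ be the selected pair. If $b^*>0$, then for all $x\ge0$ $$v_{a^*,b^*}(x)=\frac{\delta}{q}\mathbb Z^{(q)}(a^*-x)-\beta\,\tilde r^{(q)}_{b^*-a^*}(b^*-x).$$ In particular, $v_{a^*,b^*}(x)=\frac{\delta}{q}-\beta R^{(q)}(b^*-x)$ for $x\ge a^*$, and $v_{a^*,b^*}(x)=\beta\big(x-b^*-\frac{\psi_X'(0+)}{q}\big)+\frac{\delta}{q}$ for $x\ge b^*$. If $a^*=b^*=0$, then $v_{0,0}(x)=\beta x+\rho$ for $x\ge0$. In both cases, $\lim_{x\downarrow0}v_{a^*,b^*}(x)=v_{a^*,b^*}(0)=\rho$.
   Context: Let $Y$ be a spectrally positive Lévy process (not a subordinator) with Laplace exponent $\psi_Y(\theta)=\log\mathbb E[e^{-\theta Y_1}]$, $\mathbb E[Y_1]=-\psi_Y'(0+)<\infty$. Fix $q>0$, $\delta>0$, $\beta\in(0,1)$, $\rho\in\mathbb R$. Let $X_t=Y_t-\delta t$, with $\psi_X(\theta)=\psi_Y(\theta)+\delta\theta$. Scale functions $\mathbb W^{(q)},W^{(q)}$: they vanish on $(-\infty,0)$, are continuous and strictly increasing on $[0,\infty)$, and have Laplace transforms $1/(\psi_Y(\theta)-q)$ and $1/(\psi_X(\theta)-q)$, respectively, for large $\theta$. Let $\mathbb Z^{(q)}(x)=1+q\int_0^x\mathbb W^{(q)}$, $Z^{(q)}(x)=1+q\int_0^xW^{(q)}$, $\overline Z^{(q)}(x)=\int_0^xZ^{(q)}$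 (equal to $1$, $1$, $x$ for $x\le0$), and $R^{(q)}(z)=\overline Z^{(q)}(z)+\psi_X'(0+)/q$. Set $$r^{(q)}_c(z)=Z^{(q)}(z)+q\delta\int_c^z\mathbb W^{(q)}(z-y)W^{(q)}(y)\,dy,\qquad \tilde r^{(q)}_c(z)=R^{(q)}(z)+\delta\int_c^z\mathbb W^{(q)}(z-y)Z^{(q)}(y)\,dy,$$ and $\Gamma(a,b)=\delta\mathbb Z^{(q)}(a)-q\rho-q\beta\tilde r^{(q)}_{b-a}(b)$. For $0\le a<b$, $v_{a,b}(x)$ is the expected value $\mathbb E_x[\int_0^{\sigma}e^{-qt}\,dA_t+\beta\int_{[0,\sigma]}e^{-qt}\,dS_t+\rho e^{-q\sigma}]$ under the two-layer $(a,b)$ strategy. Under this strategy, dividends are paid at rate $\delta$ while the surplus $U=Y-A-S$ is above $a$ ($A_t=\delta\int_0^t\mathbf 1_{\{U_s>a\}}ds$), and the surplus is reflected at $b$ from above by the lump-sum process $S$; here $\sigma=\inf\{t>0:U_t<0\}$. It satisfies $$v_{a,b}(x)=-\frac{\Gamma(a,b)}{q}\frac{r^{(q)}_{b-a}(b-x)}{r^{(q)}_{b-a}(b)}+\frac{\delta}{q}\mathbb Z^{(q)}(a-x)-\beta\tilde r^{(q)}_{b-a}(b-x).$$ The strategy $\pi_{0,0}$ pays the whole initial surplus $x$ as a lump sum at time $0$ (immediate liquidation and ruin), so that $v_{0,0}(x)=\beta x+\rho$. Selected pair: if $\Gamma(0,0)=\delta-q\rho-\beta\psi_X'(0+)\le0$,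 then $a^*=b^*=0$. Otherwise, $b^*>0$ solves $\min_{0\le a\le b^*}\Gamma(a,b^* )=0$ and $a^*$ is the unique minimizer of $a\mapsto\Gamma(a,b^* )$ on $[0,b^*]$. When $b^*>0$, one has $\Gamma(a^*,b^* )=0$; when in addition $a^*>0$, one has $Z^{(q)}(b^*-a^* )=\beta^{-1}$. *)

(* Defs.v *)
From Stdlib Require Import Reals Lra ClassicalEpsilon.
Open Scope R_scope.

(* Riemann integral int_a^b f (signed, Stdlib convention), or 0 if f is not
   Riemann integrable on [a,b]. *)
Definition integ (f : R -> R) (a b : R) : R :=
  epsilon (inhabits 0)
    (fun I => exists pr : Riemann_integrable f a b, RiemannInt pr = I).

Definition improper_int0 (g : R -> R) (L : R) : Prop :=
  forall eps, 0 < eps -> exists M, forall T, M <= T -> Rabs (integ g 0 T - L) < eps.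

Definition laplace_eq (f : R -> R) (theta L : R) : Prop :=
  improper_int0 (fun x => exp (- theta * x) * f x) L.

Definition is_scale_function (psi : R -> R) (q : R) (f : R -> R) : Prop :=
  (forall x, x < 0 -> f x = 0) /\
  (forall x, 0 <= x -> limit1_in f (fun y => 0 <= y) (f x) x) /\
  (forall x y, 0 <= x -> x < y -> f x < f y) /\
  (exists theta0, forall theta, theta0 < theta ->
       q < psi theta /\ laplace_eq f theta (/ (psi theta - q))).

Definition Zq (q : R) (W : R -> R) (x : R) : R :=
  if Rle_dec x 0 then 1 else 1 + q * integ W 0 x.

Definition Zbarq (q : R) (W : R -> R) (x : R) : R :=
  if Rle_dec x 0 then x else integ (Zq q W) 0 x.

(* R^{(q)}(z) = Zbar(z) + psi_X'(0+)/q ; dX stands for psi_X'(0+) *)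
Definition Rq (q dX : R) (W : R -> R) (z : R) : R := Zbarq q W z + dX / q.

Section Fns.
Variables (q delta beta rho dX : R) (WW W : R -> R).

Definition r_c (c z : R) : R :=
  Zq q W z + q * delta * integ (fun y => WW (z - y) * W y) c z.

Definition rt_c (c z : R) : R :=
  Rq q dX W z + delta * integ (fun y => WW (z - y) * Zq q W y) c z.

Definition Gamma (a b : R) : R :=
  delta * Zq q WW a - q * rho - q * beta * rt_c (b - a) b.

Definition v_formula (a b x : R) : R :=
  - (Gamma a b / q) * (r_c (b - a) (b - x) / r_c (b - a) b)
  + (delta / q) * Zq q WW (a - x) - beta * rt_c (b - a) (b - x).

Definition selected_pair (a b : R) : Prop :=
  (Gamma 0 0 <= 0 /\ a = 0 /\ b = 0) \/
  (0 < Gamma 0 0 /\ 0 < b /\ 0 <= a <= b /\ Gamma a b = 0 /\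
   (forall a1, 0 <= a1 <= b -> Gamma a b <= Gamma a1 b) /\
   (forall a1, 0 <= a1 <= b -> Gamma a1 b = Gamma a b -> a1 = a)).
End Fns.

(* Main.v *)
Require Import Defs.
From Stdlib Require Import Reals Lra ClassicalEpsilon.
From Coquelicot Require Import Coquelicot.
Open Scope R_scope.

Lemma integ_RInt f a b : ex_RInt f a b -> integ f a b = RInt f a b.
Proof.
  intros H. unfold integ.
  destruct (epsilon_spec (inhabits 0) (fun I => exists pr : Riemann_integrable f a b, RiemannInt pr = I)) as [pr Hpr].
  - exists (RiemannInt (ex_RInt_Reals_0 _ _ _ H)). eexists; reflexivity.
  - rewrite <- Hpr. symmetry. apply RInt_Reals.
Qed.

Definition RInt_correctR := @RInt_correct R_CompleteNormedModule.
Definition is_RInt_uniqueR := @is_RInt_unique R_CompleteNormedModule.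
Definition ex_RInt_contR := @ex_RInt_continuous R_CompleteNormedModule.
Definition RInt_ChaslesR := @RInt_Chasles R_CompleteNormedModule.
Definition opp_RInt_swapR := @opp_RInt_swap R_CompleteNormedModule.
Definition RInt_minusR := @RInt_minus R_CompleteNormedModule.
Definition RInt_plusR := @RInt_plus R_CompleteNormedModule.
Definition RInt_scalR := @RInt_scal R_CompleteNormedModule.
Definition RInt_extR := @RInt_ext R_CompleteNormedModule.
Definition RInt_comp_linR := @RInt_comp_lin R_CompleteNormedModule.

Lemma Chasles3' g a b c : (forall u v, ex_RInt g u v) ->
  RInt g a c = RInt g a b + RInt g b c.
Proof. intros H. symmetry. apply (RInt_ChaslesR g a b c); auto. Qed.

Lemma cont_to_pt f x : continuous f x -> continuity_pt f x.
Proof. intros H. apply continuity_pt_filterlim. exact H. Qed.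
Lemma pt_to_cont f x : continuity_pt f x -> continuous f x.
Proof. intros H. apply continuity_pt_filterlim. exact H. Qed.

Lemma Rmax0_lip z y : Rabs (Rmax 0 z - Rmax 0 y) <= Rabs (z - y).
Proof. unfold Rmax; destruct (Rle_dec 0 z), (Rle_dec 0 y); unfold Rabs;
  repeat destruct Rcase_abs; lra. Qed.

Lemma Rmax0_cont y : continuity_pt (fun z => Rmax 0 z) y.
Proof.
  unfold continuity_pt, continue_in, limit1_in, limit_in. intros eps He.
  exists eps. split; [lra|]. intros z [_ Hz]. simpl in *. unfold R_dist in *.
  eapply Rle_lt_trans; [apply Rmax0_lip|exact Hz].
Qed.

Definition fp (f : R -> R) (y : R) := f (Rmax 0 y).

Section Scale.
Variable f : R -> R.
Hypothesis Hneg : forall x, x < 0 -> f x = 0.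
Hypothesis Hcont : forall x, 0 <= x -> limit1_in f (fun y => 0 <= y) (f x) x.
Hypothesis Hinc : forall x y, 0 <= x -> x < y -> f x < f y.

Lemma fp_pt y : continuity_pt (fp f) y.
Proof.
  unfold continuity_pt, continue_in, limit1_in, limit_in. intros eps He.
  destruct (Hcont (Rmax 0 y) (Rmax_l 0 y) eps He) as [alp [Ha Hal]].
  exists alp. split; [lra|]. intros z [_ Hz]. simpl in *. unfold R_dist in *.
  unfold fp. apply Hal. split; [apply Rmax_l|]. simpl. unfold R_dist.
  eapply Rle_lt_trans; [apply Rmax0_lip|exact Hz].
Qed.

Lemma fp_cont y : continuous (fp f) y.
Proof. apply pt_to_cont, fp_pt. Qed.

Lemma fp_eq y : 0 <= y -> fp f y = f y.
Proof. intros H; unfold fp; rewrite Rmax_right; auto. Qed.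

Lemma exRInt_fp a b : ex_RInt (fp f) a b.
Proof. apply ex_RInt_contR. intros; apply fp_cont. Qed.

Lemma isRInt_f a b : 0 <= a -> 0 <= b -> is_RInt f a b (RInt (fp f) a b).
Proof.
  intros Ha Hb. eapply is_RInt_ext; [|apply RInt_correctR, exRInt_fp].
  intros x Hx. apply fp_eq. assert (0 <= Rmin a b) by (apply Rmin_glb; auto). lra.
Qed.

Lemma integ_f a b : 0 <= a -> 0 <= b -> integ f a b = RInt (fp f) a b.
Proof.
  intros Ha Hb. rewrite integ_RInt. apply is_RInt_uniqueR, isRInt_f; auto.
  eexists; apply isRInt_f; auto.
Qed.

Variable q : R.
Lemma Zq_all y : Zq q f y = 1 + q * RInt (fp f) 0 (Rmax 0 y).
Proof.
  unfold Zq. destruct (Rle_dec y 0).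
  - rewrite Rmax_left by auto. rewrite RInt_point. simpl. unfold zero; simpl. ring.
  - rewrite Rmax_right by lra. rewrite integ_f; lra.
Qed.

Lemma prim_pt s : continuity_pt (fun s => RInt (fp f) 0 s) s.
Proof.
  apply cont_to_pt. apply (@ex_derive_continuous R_AbsRing R_NormedModule). eexists.
  apply (is_derive_RInt (fp f) (fun s => RInt (fp f) 0 s) 0 s).
  - apply filter_forall. intros; apply RInt_correctR, exRInt_fp.
  - apply fp_cont.
Qed.

Lemma Zq_pt y : continuity_pt (Zq q f) y.
Proof.
  apply (continuity_pt_ext (fun y => 1 + q * RInt (fp f) 0 (Rmax 0 y))).
  { intros; symmetry; apply Zq_all. }
  apply continuity_pt_plus; [apply continuity_pt_const; intros ? ?; auto|].
  apply continuity_pt_mult; [apply continuity_pt_const; intros ? ?; auto|].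
  apply (continuity_pt_comp (fun z => Rmax 0 z) (fun s => RInt (fp f) 0 s)).
  apply Rmax0_cont. apply prim_pt.
Qed.

Lemma Zq_cont y : continuous (Zq q f) y.
Proof. apply pt_to_cont, Zq_pt. Qed.


Lemma f_mono x y : 0 <= x -> x <= y -> f x <= f y.
Proof. intros Hx [H|H]; [apply Rlt_le, Hinc; auto|subst; lra]. Qed.

Lemma fp_mono x y : x <= y -> fp f x <= fp f y.
Proof. intros H; unfold fp; apply f_mono; [apply Rmax_l|]. unfold Rmax; destruct (Rle_dec 0 x), (Rle_dec 0 y); lra. Qed.

Lemma fp_bound T y : 0 <= T -> y <= T -> Rabs (fp f y) <= Rabs (f 0) + Rabs (f T).
Proof.
  intros HT Hy. unfold fp. set (s := Rmax 0 y).
  assert (0 <= s) by apply Rmax_l. assert (s <= T) by (apply Rmax_lub; auto).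
  assert (f 0 <= f s) by (apply f_mono; lra). assert (f s <= f T) by (apply f_mono; lra).
  unfold Rabs; repeat destruct Rcase_abs; lra.
Qed.

Lemma Zq_diff s s' : 0 <= s -> 0 <= s' -> Zq q f s - Zq q f s' = q * RInt (fp f) s' s.
Proof.
  intros Hs Hs'. rewrite !Zq_all, !Rmax_right by auto.
  rewrite (Chasles3' _ 0 s' s) by (intros; apply exRInt_fp). ring.
Qed.

Lemma Zq0 : Zq q f 0 = 1.
Proof. unfold Zq; destruct (Rle_dec 0 0); lra. Qed.

End Scale.

Lemma prim_pt_g g s : (forall y, continuity_pt g y) -> continuity_pt (fun s => RInt g 0 s) s.
Proof.
  intros Hg. apply cont_to_pt. apply (@ex_derive_continuous R_AbsRing R_NormedModule). eexists.
  apply (is_derive_RInt g (fun s => RInt g 0 s) 0 s).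
  - apply filter_forall. intros; apply RInt_correctR, ex_RInt_contR. intros; apply pt_to_cont; auto.
  - apply pt_to_cont; auto.
Qed.


Lemma RInt_constR c a b : RInt (fun _ => c) a b = (b - a) * c.
Proof. rewrite RInt_const. reflexivity. Qed.

Lemma Chasles3 g a b c : (forall u v, ex_RInt g u v) ->
  RInt g a c = RInt g a b + RInt g b c.
Proof. intros H. symmetry. apply (RInt_ChaslesR g a b c); auto. Qed.

Lemma exRInt_pt g a b : (forall y, continuity_pt g y) -> ex_RInt g a b.
Proof. intros H. apply ex_RInt_contR. intros; apply pt_to_cont; auto. Qed.

Lemma RInt_le_const_up g a b c : a <= b -> ex_RInt g a b ->
  (forall x, a < x < b -> g x <= c) -> RInt g a b <= (b - a) * c.
Proof. intros Hab Hex H. rewrite <- RInt_constR. apply RInt_le; auto.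
  apply ex_RInt_const. Qed.

Lemma exp_le_exp x y : x <= y -> exp x <= exp y.
Proof. intros [H|H]; [apply Rlt_le, exp_increasing; auto|subst; lra]. Qed.

Lemma exp_big u : 0 < u -> u * u / 4 < exp u.
Proof.
  intros Hu. replace u with (u/2 + u/2) at 3 by field. rewrite exp_plus.
  assert (H := exp_ineq1 (u/2)). assert (u/2 <> 0) by lra. specialize (H H0).
  nra.
Qed.

Section Lap.
Variable f : R -> R.
Hypothesis Hneg : forall x, x < 0 -> f x = 0.
Hypothesis Hcont : forall x, 0 <= x -> limit1_in f (fun y => 0 <= y) (f x) x.
Hypothesis Hinc : forall x y, 0 <= x -> x < y -> f x < f y.
Variable psi : R -> R.
Variable q : R.
Hypothesis HL : exists theta0, forall theta, theta0 < theta ->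
       q < psi theta /\ laplace_eq f theta (/ (psi theta - q)).

Definition G th x := exp (- th * x) * fp f x.

Lemma G_pt th y : continuity_pt (G th) y.
Proof.
  unfold G. apply continuity_pt_mult.
  - apply (continuity_pt_comp (fun x => - th * x) exp).
    + apply continuity_pt_mult; [apply continuity_pt_const; intros ? ?; auto|apply continuity_pt_id].
    + apply derivable_continuous_pt, derivable_pt_exp.
  - apply fp_pt; auto.
Qed.

Lemma G_ex th a b : ex_RInt (G th) a b.
Proof. apply exRInt_pt, G_pt. Qed.

Lemma integ_G th T : 0 <= T ->
  integ (fun x => exp (- th * x) * f x) 0 T = RInt (G th) 0 T.
Proof.
  intros HT. assert (E : forall x, Rmin 0 T < x < Rmax 0 T -> G th x = exp (- th * x) * f x).
  { intros x Hx. unfold G. rewrite fp_eq; auto. rewrite Rmin_left in Hx; lra. }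
  rewrite integ_RInt.
  - symmetry; apply RInt_extR; auto.
  - eapply ex_RInt_ext; [exact E|apply G_ex].
Qed.

Lemma f0_nonneg : 0 <= f 0.
Proof.
  destruct (Rle_or_lt 0 (f 0)) as [|Hf0]; auto. exfalso.
  set (m := - f 0 / 2). assert (Hm : 0 < m) by (unfold m; lra).
  destruct (Hcont 0 (Rle_refl 0) m Hm) as [alp [Halp Hal]].
  set (eps := Rmin (alp/2) 1).
  assert (Heps : 0 < eps) by (unfold eps; apply Rmin_glb_lt; lra).
  assert (Heps1 : eps <= 1) by (unfold eps; apply Rmin_r).
  assert (Hfe : forall x, 0 <= x <= eps -> f x < - m).
  { intros x Hx. assert (eps <= alp/2) by (unfold eps; apply Rmin_l).
    assert (Hx0 := Hal x). simpl in Hx0. unfold R_dist in Hx0.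
    assert (Hr : Rabs (f x - f 0) < m). { apply Hx0. split; [lra|]. rewrite Rminus_0_r, Rabs_pos_eq; lra. }
    unfold m in *. apply Rabs_def2 in Hr. lra. }
  destruct HL as [th0 Hth0].
  assert (Knear : forall th, 1/eps <= th -> RInt (G th) 0 eps <= - m * exp (-1) / th).
  { intros th Hth. assert (Hthp : 0 < th) by (assert (0 < 1/eps) by (apply Rdiv_lt_0_compat; lra); lra).
    assert (Hie : 1/th <= eps).
    { replace eps with (1/(1/eps)) by (field; lra). apply Rmult_le_compat_l; [lra|].
      apply Rinv_le_contravar; auto. apply Rdiv_lt_0_compat; lra. }
    rewrite (Chasles3 _ 0 (1/th) eps) by (intros; apply G_ex).
    assert (H1 : RInt (G th) 0 (1/th) <= (1/th - 0) * (- m * exp (-1))).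
    { apply RInt_le_const_up.
      - apply Rlt_le, Rdiv_lt_0_compat; lra.
      - apply G_ex.
      - intros x Hx. unfold G. rewrite fp_eq by lra.
        assert (f x < - m) by (apply Hfe; lra).
        assert (exp (-1) <= exp (- th * x)).
        { apply exp_le_exp. assert (th * x <= th * (1/th)) by (apply Rmult_le_compat_l; lra).
          replace (th * (1/th)) with 1 in H0 by (field; lra). lra. }
        assert (0 < exp (-1)) by apply exp_pos. nra. }
    assert (H2 : RInt (G th) (1/th) eps <= (eps - 1/th) * 0).
    { apply RInt_le_const_up; auto. apply G_ex.
      intros x Hx. unfold G. rewrite fp_eq by (assert (0 < 1/th) by (apply Rdiv_lt_0_compat; lra); lra).
      assert (f x < - m) by (apply Hfe; split; [assert (0 < 1/th) by (apply Rdiv_lt_0_compat; lra)|]; lra).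
      assert (0 < exp (- th * x)) by apply exp_pos. nra. }
    replace (- m * exp (-1) / th) with ((1/th - 0) * (- m * exp (-1))) by (field; lra). lra. }
  assert (Hexp1 : 0 < exp (-1)) by apply exp_pos.
  assert (Hie : 0 < 1/eps) by (apply Rdiv_lt_0_compat; lra).
  destruct (classic (exists xs, 0 <= xs /\ 0 < f xs)) as [[xs [Hxs0 Hxs]]|Hno].
  -
    assert (Hxse : eps < xs).
    { destruct (Rle_or_lt xs eps); auto. assert (f xs < - m) by (apply Hfe; lra). lra. }
    set (th1 := th0 + 1).
    destruct (Hth0 th1 ltac:(unfold th1; lra)) as [Hq1 Hl1].
    set (L1 := / (psi th1 - q)).
    destruct (Hl1 1 Rlt_0_1) as [M1 HM1].
    set (C0 := RInt (G th1) 0 xs).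
    set (K := Rmax 0 (L1 + 1 - C0)).
    set (A := xs * f xs + K * exp (th1 * xs)).
    assert (HK : 0 <= K) by (unfold K; apply Rmax_l).
    assert (HA : 0 <= A).
    { unfold A. assert (0 < exp (th1 * xs)) by apply exp_pos. nra. }
    set (th := Rmax (Rmax th1 (1/eps)) (8 * A / (m * exp (-1) * (eps * eps))) + 1).
    assert (Hth1 : th1 < th) by (unfold th; assert (H := Rmax_l (Rmax th1 (1/eps)) (8 * A / (m * exp (-1) * (eps * eps)))); assert (H' := Rmax_l th1 (1/eps)); lra).
    assert (Hthe : 1/eps < th) by (unfold th; assert (H := Rmax_l (Rmax th1 (1/eps)) (8 * A / (m * exp (-1) * (eps * eps)))); assert (H' := Rmax_r th1 (1/eps)); lra).
    assert (HthA : 8 * A / (m * exp (-1) * (eps * eps)) < th) by (unfold th; assert (H := Rmax_r (Rmax th1 (1/eps)) (8 * A / (m * exp (-1) * (eps * eps)))); lra).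
    assert (Hthp : 0 < th) by lra.
    assert (Main : forall T, Rmax M1 xs <= T -> RInt (G th) 0 T <= - m * exp (-1) / (2 * th)).
    { intros T HT. assert (HTM : M1 <= T) by (eapply Rle_trans; [apply Rmax_l|exact HT]).
      assert (HTx : xs <= T) by (eapply Rle_trans; [apply Rmax_r|exact HT]).
      rewrite (Chasles3 _ 0 eps T) by (intros; apply G_ex).
      rewrite (Chasles3 _ eps xs T) by (intros; apply G_ex).
      assert (N := Knear th (Rlt_le _ _ Hthe)).
      assert (P2 : RInt (G th) eps xs <= (xs - eps) * (exp (- th * eps) * f xs)).
      { apply RInt_le_const_up; [lra|apply G_ex|]. intros x Hx. unfold G. rewrite fp_eq by lra.
        assert (f x < f xs) by (apply Hinc; lra).
        assert (exp (- th * x) <= exp (- th * eps)) by (apply exp_le_exp; nra).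
        assert (0 < exp (- th * x)) by apply exp_pos. nra. }
      assert (P3 : RInt (G th) xs T <= exp (- (th - th1) * xs) * RInt (G th1) xs T).
      { assert (E : RInt (fun x => scal (exp (- (th - th1) * xs)) (G th1 x)) xs T = scal (exp (- (th - th1) * xs)) (RInt (G th1) xs T)) by (apply RInt_scalR, G_ex).
        change (RInt (fun x => exp (- (th - th1) * xs) * G th1 x) xs T = exp (- (th - th1) * xs) * RInt (G th1) xs T) in E.
        rewrite <- E. apply RInt_le; [lra|apply G_ex| |].
        - apply exRInt_pt. intros y. apply continuity_pt_mult; [apply continuity_pt_const; intros ? ?; auto|apply G_pt].
        - intros x Hx. unfold G. unfold scal; simpl; unfold mult; simpl.
          rewrite fp_eq by lra.
          replace (- th * x) with (- (th - th1) * x + - th1 * x) by ring. rewrite exp_plus.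
          assert (f xs < f x) by (apply Hinc; lra).
          assert (0 < exp (- th1 * x)) by apply exp_pos.
          assert (exp (- (th - th1) * x) <= exp (- (th - th1) * xs)) by (apply exp_le_exp; nra).
          assert (0 < exp (- (th - th1) * x)) by apply exp_pos.
          assert (0 < exp (- th1 * x) * f x) by nra. nra. }
      assert (P4 : RInt (G th1) xs T <= K).
      { assert (HT0 : 0 <= T) by lra.
        specialize (HM1 T HTM). rewrite integ_G in HM1 by lra. fold L1 in HM1.
        apply Rabs_def2 in HM1.
        rewrite (Chasles3 _ 0 xs T) in HM1 by (intros; apply G_ex). fold C0 in HM1.
        unfold K. eapply Rle_trans; [|apply Rmax_r]. lra. }
      assert (P5 : exp (- (th - th1) * xs) <= exp (th1 * xs) * exp (- th * eps)).
      { rewrite <- exp_plus. apply exp_le_exp. nra. }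
      assert (Hee : 0 < exp (- (th - th1) * xs)) by apply exp_pos.
      assert (Hee2 : 0 < exp (- th * eps)) by apply exp_pos.
      assert (P6 : RInt (G th) eps xs + RInt (G th) xs T <= A * exp (- th * eps)).
      { unfold A. assert (0 < exp (th1 * xs)) by apply exp_pos.
        assert (exp (- (th - th1) * xs) * RInt (G th1) xs T <= exp (- (th - th1) * xs) * K)
          by (apply Rmult_le_compat_l; lra).
        assert (exp (- (th - th1) * xs) * K <= exp (th1 * xs) * exp (- th * eps) * K)
          by (apply Rmult_le_compat_r; lra).
        assert ((xs - eps) * (exp (- th * eps) * f xs) <= xs * f xs * exp (- th * eps)) by (assert (0 < exp (- th * eps) * f xs) by (apply Rmult_lt_0_compat; lra); nra).
        nra. }
      assert (Hbig := exp_big (th * eps) ltac:(nra)).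
      assert (P7 : A * exp (- th * eps) <= m * exp (-1) / (2 * th)).
      { replace (- th * eps) with (- (th * eps)) by ring. rewrite exp_Ropp.
        assert (Hpos : 0 < exp (th * eps)) by apply exp_pos.
        assert (HA' : 8 * A <= m * exp (-1) * (eps * eps) * th).
        { assert (0 < m * exp (-1) * (eps * eps)) by (apply Rmult_lt_0_compat; nra).
          apply Rlt_le in HthA. unfold Rdiv in HthA.
          apply (Rmult_le_compat_l (m * exp (-1) * (eps * eps))) in HthA; [|lra].
          rewrite <- Rmult_assoc, (Rmult_comm _ (8*A)), Rmult_assoc, Rinv_r, Rmult_1_r in HthA; lra. }
        apply (Rmult_le_reg_r (2 * th * exp (th * eps))); [nra|].
        replace (A * / exp (th * eps) * (2 * th * exp (th * eps))) with (2 * th * A) by (field; lra).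
        replace (m * exp (-1) / (2 * th) * (2 * th * exp (th * eps))) with (m * exp (-1) * exp (th * eps)) by (field; lra).
        assert (0 < m * exp (-1)) by nra.
        assert (m * exp (-1) * (th * eps * (th * eps) / 4) <= m * exp (-1) * exp (th * eps)) by (apply Rmult_le_compat_l; lra).
        nra. }
      assert (- m * exp (-1) / th + m * exp (-1) / (2 * th) = - m * exp (-1) / (2 * th)) by (field; lra).
      lra. }
    destruct (Hth0 th ltac:(unfold th1 in Hth1; lra)) as [Hq Hl].
    assert (HLp : 0 < / (psi th - q)) by (apply Rinv_0_lt_compat; lra).
    destruct (Hl _ HLp) as [M HM].
    set (T := Rmax M (Rmax M1 xs)).
    specialize (HM T (Rmax_l _ _)).
    assert (HT0 : 0 <= T) by (unfold T; eapply Rle_trans; [|apply Rmax_r]; eapply Rle_trans; [|apply Rmax_r]; lra).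
    rewrite integ_G in HM by auto.
    specialize (Main T (Rmax_r _ _)).
    apply Rabs_def2 in HM.
    assert (0 < m * exp (-1) / (2 * th)) by (apply Rdiv_lt_0_compat; nra).
    lra.
  -
    set (th := Rmax (th0 + 1) (1/eps)).
    assert (Hth0' : th0 < th) by (unfold th; assert (H := Rmax_l (th0+1) (1/eps)); lra).
    assert (Hthe : 1/eps <= th) by (unfold th; apply Rmax_r).
    assert (Hthp : 0 < th) by lra.
    destruct (Hth0 th Hth0') as [Hq Hl].
    assert (HLp : 0 < / (psi th - q)) by (apply Rinv_0_lt_compat; lra).
    destruct (Hl _ HLp) as [M HM].
    set (T := Rmax M eps).
    specialize (HM T (Rmax_l _ _)).
    assert (HT0 : eps <= T) by (unfold T; apply Rmax_r).
    rewrite integ_G in HM by lra.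
    rewrite (Chasles3 _ 0 eps T) in HM by (intros; apply G_ex).
    assert (N := Knear th Hthe).
    assert (P : RInt (G th) eps T <= (T - eps) * 0).
    { apply RInt_le_const_up; auto. apply G_ex. intros x Hx. unfold G. rewrite fp_eq by lra.
      assert (f x <= 0). { destruct (Rle_or_lt (f x) 0); auto. exfalso; apply Hno; exists x; split; [lra|auto]. }
      assert (0 < exp (- th * x)) by apply exp_pos. nra. }
    apply Rabs_def2 in HM.
    assert (0 < m * exp (-1) / th) by (apply Rdiv_lt_0_compat; nra).
    lra.
Qed.

End Lap.

Definition rc (h : R -> R) := forall eps, 0 < eps -> exists d, 0 < d /\
  forall x, 0 < x < d -> Rabs (h x - h 0) < eps.

Lemma rc_plus h1 h2 : rc h1 -> rc h2 -> rc (fun x => h1 x + h2 x).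
Proof.
  intros H1 H2 eps He. destruct (H1 (eps/2)) as [d1 [Hd1 P1]]; [lra|].
  destruct (H2 (eps/2)) as [d2 [Hd2 P2]]; [lra|].
  exists (Rmin d1 d2). split; [apply Rmin_glb_lt; auto|]. intros x Hx.
  assert (x < d1) by (eapply Rlt_le_trans; [apply Hx|apply Rmin_l]).
  assert (x < d2) by (eapply Rlt_le_trans; [apply Hx|apply Rmin_r]).
  specialize (P1 x ltac:(lra)). specialize (P2 x ltac:(lra)).
  apply Rabs_def2 in P1; apply Rabs_def2 in P2. apply Rabs_def1; lra.
Qed.

Lemma rc_scal k h : rc h -> rc (fun x => k * h x).
Proof.
  intros H eps He. destruct (H (eps / (Rabs k + 1))) as [d [Hd P]].
  { apply Rdiv_lt_0_compat; auto. assert (0 <= Rabs k) by apply Rabs_pos. lra. }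
  exists d. split; auto. intros x Hx. specialize (P x Hx).
  rewrite <- Rmult_minus_distr_l, Rabs_mult.
  assert (0 <= Rabs k) by apply Rabs_pos.
  assert (0 <= Rabs (h x - h 0)) by apply Rabs_pos.
  apply (Rmult_lt_compat_l (Rabs k + 1)) in P; [|lra].
  replace ((Rabs k + 1) * (eps / (Rabs k + 1))) with eps in P by (field; lra). nra.
Qed.

Lemma rc_const c : rc (fun _ => c).
Proof. intros eps He. exists 1. split; [lra|]. intros. rewrite Rminus_diag, Rabs_R0; auto. Qed.

Lemma rc_ext h g : (exists d0, 0 < d0 /\ forall x, 0 <= x < d0 -> h x = g x) -> rc g -> rc h.
Proof.
  intros [d0 [Hd0 E]] H eps He. destruct (H eps He) as [d [Hd P]].
  exists (Rmin d d0). split; [apply Rmin_glb_lt; auto|]. intros x Hx.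
  assert (x < d) by (eapply Rlt_le_trans; [apply Hx|apply Rmin_l]).
  assert (x < d0) by (eapply Rlt_le_trans; [apply Hx|apply Rmin_r]).
  rewrite !E by lra. apply P; lra.
Qed.

Lemma rc_pt h : continuity_pt h 0 -> rc h.
Proof.
  intros H eps He. destruct (H eps He) as [d [Hd P]]. exists d. split; auto.
  intros x Hx. apply (P x). split.
  - unfold D_x, no_cond. split; auto. lra.
  - simpl. unfold R_dist. rewrite Rminus_0_r, Rabs_pos_eq; lra.
Qed.

Lemma rc_lip h K d0 : 0 < d0 -> (forall x, 0 < x < d0 -> Rabs (h x - h 0) <= K * x) -> rc h.
Proof.
  intros Hd0 H eps He. exists (Rmin d0 (eps / (Rabs K + 1))). split.
  { apply Rmin_glb_lt; auto. apply Rdiv_lt_0_compat; auto. assert (0 <= Rabs K) by apply Rabs_pos. lra. }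
  intros x Hx.
  assert (x < d0) by (eapply Rlt_le_trans; [apply Hx|apply Rmin_l]).
  assert (x < eps / (Rabs K + 1)) by (eapply Rlt_le_trans; [apply Hx|apply Rmin_r]).
  eapply Rle_lt_trans; [apply H; lra|].
  assert (0 <= Rabs K) by apply Rabs_pos. assert (K <= Rabs K) by apply RRle_abs.
  apply (Rmult_lt_compat_l (Rabs K + 1)) in H1; [|lra].
  replace ((Rabs K + 1) * (eps / (Rabs K + 1))) with eps in H1 by (field; lra). nra.
Qed.

Lemma integ_ext_cont f g u v : (forall y, continuity_pt g y) ->
  (forall x, Rmin u v < x < Rmax u v -> g x = f x) -> integ f u v = RInt g u v.
Proof.
  intros Hg E. assert (Hex : ex_RInt g u v) by (apply exRInt_pt; auto).
  assert (Hi : is_RInt f u v (RInt g u v)) by (eapply is_RInt_ext; [exact E|apply RInt_correctR; auto]).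
  rewrite integ_RInt. apply is_RInt_uniqueR; auto. eexists; eauto.
Qed.

Lemma conv_zero (WW : R -> R) (g : R -> R) z c : (forall x, x < 0 -> WW x = 0) -> z <= c ->
  integ (fun y => WW (z - y) * g y) c z = 0.
Proof.
  intros Hneg Hzc.
  assert (Hc : is_RInt (fun _ : R => 0) c z 0).
  { assert (Hc := @is_RInt_const R_NormedModule c z 0).
    unfold scal in Hc; simpl in Hc; unfold mult in Hc; simpl in Hc.
    rewrite Rmult_0_r in Hc. exact Hc. }
  assert (H0 : is_RInt (fun y => WW (z - y) * g y) c z 0).
  { eapply is_RInt_ext; [|exact Hc].
    intros x Hx. rewrite Rmin_right, Rmax_left in Hx by auto. rewrite Hneg by lra. symmetry; apply Rmult_0_l. }
  rewrite integ_RInt; [apply is_RInt_uniqueR; auto|eexists; eauto].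
Qed.

Lemma conv_swap g h z c : (forall y, continuity_pt g y) -> (forall y, continuity_pt h y) ->
  RInt (fun y => g (z - y) * h y) c z = RInt (fun t => g t * h (z - t)) 0 (z - c).
Proof.
  intros Hg Hh. set (F := fun y => g (z - y) * h y).
  assert (HF : forall y, continuity_pt F y).
  { intros y. unfold F. apply continuity_pt_mult; [|auto].
    apply (continuity_pt_comp (fun y => z - y) g); [|auto].
    apply continuity_pt_minus; [apply continuity_pt_const; intros ? ?; auto|apply continuity_pt_id]. }
  assert (HG : forall y, continuity_pt (fun t => g t * h (z - t)) y).
  { intros y. apply continuity_pt_mult; [auto|].
    apply (continuity_pt_comp (fun y => z - y) h); [|auto].
    apply continuity_pt_minus; [apply continuity_pt_const; intros ? ?; auto|apply continuity_pt_id]. }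
  assert (E := RInt_comp_linR F (-1) z 0 (z - c) (exRInt_pt _ _ _ HF)).
  replace (-1 * 0 + z) with z in E by ring.
  replace (-1 * (z - c) + z) with c in E by ring.
  rewrite <- (opp_RInt_swapR F c z (exRInt_pt _ _ _ HF)) in E.
  assert (E2 : RInt (fun y => scal (-1) (F (-1 * y + z))) 0 (z - c)
             = RInt (fun t => scal (-1) (g t * h (z - t))) 0 (z - c)).
  { apply RInt_extR. intros x _. unfold F. f_equal. f_equal; f_equal; ring. }
  assert (E3 : RInt (fun t => scal (-1) (g t * h (z - t))) 0 (z - c) = opp (RInt F c z)).
  { etransitivity; [symmetry; exact E2|exact E]. }
  clear E E2. rename E3 into E.
  assert (E4 := RInt_scalR (fun t => g t * h (z - t)) 0 (z - c) (-1) (exRInt_pt _ _ _ HG)).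
  assert (E5 : scal (-1) (RInt (fun t => g t * h (z - t)) 0 (z - c)) = opp (RInt F c z)).
  { etransitivity; [symmetry; exact E4|exact E]. }
  clear E E4. rename E5 into E.
  unfold scal, opp in E; simpl in E; unfold mult in E; simpl in E.
  fold F. lra.
Qed.

Section Main.
Variables (q : R) (WW W : R -> R).
Hypothesis Hq : 0 < q.
Hypothesis Hn1 : forall x, x < 0 -> WW x = 0.
Hypothesis Hc1 : forall x, 0 <= x -> limit1_in WW (fun y => 0 <= y) (WW x) x.
Hypothesis Hi1 : forall x y, 0 <= x -> x < y -> WW x < WW y.
Hypothesis Hc2 : forall x, 0 <= x -> limit1_in W (fun y => 0 <= y) (W x) x.
Hypothesis Hi2 : forall x y, 0 <= x -> x < y -> W x < W y.

Lemma conv_rep a b x : 0 <= a <= b -> 0 <= x <= a ->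
  integ (fun y => WW (b - x - y) * Zq q W y) (b - a) (b - x)
  = RInt (fun t => fp WW t * Zq q W (b - x - t)) 0 (a - x).
Proof.
  intros Hab Hx.
  rewrite (integ_ext_cont _ (fun y => fp WW (b - x - y) * Zq q W y)).
  - rewrite (conv_swap (fp WW) (Zq q W) (b - x) (b - a)).
    + replace (b - x - (b - a)) with (a - x) by ring. reflexivity.
    + apply (fp_pt WW Hc1).
    + apply (Zq_pt W Hc2).
  - intros y. apply continuity_pt_mult; [|apply (Zq_pt W Hc2)].
    apply (continuity_pt_comp (fun y => b - x - y) (fp WW)); [|apply (fp_pt WW Hc1)].
    apply continuity_pt_minus; [apply continuity_pt_const; intros ? ?; auto|apply continuity_pt_id].
  - intros y Hy. rewrite Rmin_left, Rmax_right in Hy by lra. rewrite fp_eq by lra. reflexivity.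
Qed.

Lemma P3_rc a b : 0 < a <= b ->
  rc (fun x => integ (fun y => WW (b - x - y) * Zq q W y) (b - a) (b - x)).
Proof.
  intros Hab.
  set (MWW := Rabs (WW 0) + Rabs (WW a)).
  set (MW := Rabs (W 0) + Rabs (W b)).
  set (MZ := 1 + q * (b * MW)).
  assert (HMWW : 0 <= MWW) by (unfold MWW; assert (H1 := Rabs_pos (WW 0)); assert (H2 := Rabs_pos (WW a)); lra).
  assert (HMW : 0 <= MW) by (unfold MW; assert (H1 := Rabs_pos (W 0)); assert (H2 := Rabs_pos (W b)); lra).
  set (Z := Zq q W). set (Wp := fp W). set (WWp := fp WW).
  assert (BWW : forall t, t <= a -> Rabs (WWp t) <= MWW) by (intros; apply (fp_bound WW Hi1); lra).
  assert (BW : forall t, t <= b -> Rabs (Wp t) <= MW) by (intros; apply (fp_bound W Hi2); lra).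
  assert (BZ : forall s, 0 <= s <= b -> Rabs (Z s) <= MZ).
  { intros s Hs. unfold Z. rewrite (Zq_all W Hc2), Rmax_right by lra.
    assert (Habs := abs_RInt_le_const (fp W) 0 s MW ltac:(lra) (exRInt_fp W Hc2 0 s)
       ltac:(intros; apply BW; lra)).
    unfold MZ. eapply Rle_trans; [apply Rabs_triang|]. rewrite Rabs_R1, Rabs_mult, (Rabs_pos_eq q) by lra.
    assert (s * MW <= b * MW) by nra. nra. }
  apply (rc_lip _ (a * (MWW * (q * MW)) + MWW * MZ) a); [lra|].
  intros x Hx. rewrite !conv_rep by lra.
  replace (a - 0) with a by ring.
  set (H := fun x t => WWp t * Z (b - x - t)).
  assert (HHc : forall x y, continuity_pt (H x) y).
  { intros x0 y. unfold H. apply continuity_pt_mult; [apply (fp_pt WW Hc1)|].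
    apply (continuity_pt_comp (fun t => b - x0 - t) Z); [|apply (Zq_pt W Hc2)].
    apply continuity_pt_minus; [apply continuity_pt_const; intros ? ?; auto|apply continuity_pt_id]. }
  change (Rabs (RInt (H x) 0 (a - x) - RInt (H 0) 0 a) <= (a * (MWW * (q * MW)) + MWW * MZ) * x).
  rewrite (Chasles3' (H 0) 0 (a - x) a) by (intros; apply exRInt_pt; auto).
  assert (Ed : RInt (H x) 0 (a - x) - RInt (H 0) 0 (a - x) = RInt (fun t => H x t - H 0 t) 0 (a - x)).
  { symmetry. apply (RInt_minusR (H x) (H 0)); apply exRInt_pt; auto. }
  assert (B1 : Rabs (RInt (fun t => H x t - H 0 t) 0 (a - x)) <= (a - x - 0) * (MWW * (q * (x * MW)))).
  { apply abs_RInt_le_const; [lra| |].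
    - apply exRInt_pt. intros; apply continuity_pt_minus; auto.
    - intros t Ht. unfold H. rewrite <- Rmult_minus_distr_l, Rabs_mult.
      assert (E : Z (b - x - t) - Z (b - 0 - t) = q * RInt Wp (b - 0 - t) (b - x - t))
        by (unfold Z, Wp; apply (Zq_diff W Hc2); lra).
      rewrite E, Rabs_mult, (Rabs_pos_eq q) by lra.
      rewrite <- (opp_RInt_swapR Wp) by (apply (exRInt_fp W Hc2)).
      change (Rabs (WWp t) * (q * Rabs (- RInt Wp (b - x - t) (b - 0 - t))) <= MWW * (q * (x * MW))).
      rewrite Rabs_Ropp.
      assert (Hb := abs_RInt_le_const Wp (b - x - t) (b - 0 - t) MW ltac:(lra) (exRInt_fp W Hc2 _ _)
         ltac:(intros; apply BW; lra)).
      replace (b - 0 - t - (b - x - t)) with x in Hb by ring.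
      assert (H1 := BWW t ltac:(lra)). assert (H2 := Rabs_pos (WWp t)).
      assert (H3 := Rabs_pos (RInt Wp (b - x - t) (b - 0 - t))).
      apply Rmult_le_compat; try lra; nra. }
  assert (B2 : Rabs (RInt (H 0) (a - x) a) <= (a - (a - x)) * (MWW * MZ)).
  { apply abs_RInt_le_const; [lra|apply exRInt_pt; auto|].
    intros t Ht. unfold H. rewrite Rabs_mult.
    apply Rmult_le_compat; try apply Rabs_pos; [apply BWW; lra|apply BZ; lra]. }
  replace (RInt (H x) 0 (a - x) - (RInt (H 0) 0 (a - x) + RInt (H 0) (a - x) a))
    with (RInt (fun t => H x t - H 0 t) 0 (a - x) - RInt (H 0) (a - x) a) by lra.
  eapply Rle_trans; [apply Rabs_triang|]. rewrite Rabs_Ropp.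
  assert (0 <= MWW * (q * MW)) by (apply Rmult_le_pos; nra).
  assert ((a - x - 0) * (MWW * (q * (x * MW))) <= a * (MWW * (q * MW)) * x).
  { replace ((a - x - 0) * (MWW * (q * (x * MW)))) with ((a - x) * (MWW * (q * MW)) * x) by ring.
    apply Rmult_le_compat_r; [lra|]. nra. }
  assert ((a - (a - x)) * (MWW * MZ) = MWW * MZ * x) by ring.
  nra.
Qed.

Lemma RInt_le_const_low g a b c : a <= b -> ex_RInt g a b ->
  (forall x, a < x < b -> c <= g x) -> (b - a) * c <= RInt g a b.
Proof. intros Hab Hex H. rewrite <- RInt_constR. apply RInt_le; auto.
  apply ex_RInt_const. Qed.

Lemma not_eq_ab (delta beta rho dX b : R) : 0 < delta -> 0 < beta < 1 -> 0 <= WW 0 -> 0 < b ->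
  (forall a1, 0 <= a1 <= b -> Gamma q delta beta rho dX WW W b b <= Gamma q delta beta rho dX WW W a1 b) ->
  (forall a1, 0 <= a1 <= b -> Gamma q delta beta rho dX WW W a1 b = Gamma q delta beta rho dX WW W b b -> a1 = b) -> False.
Proof.
  intros Hd Hbeta HW0 Hb Hmin Huniq.
  set (Z := Zq q W).
  assert (HWb : 0 < WW b) by (assert (H := Hi1 0 b ltac:(lra) Hb); lra).
  set (U := (1 + beta) / (2 * beta)).
  assert (HU1 : 1 < U) by (unfold U; apply (Rmult_lt_reg_r (2*beta)); [lra|]; field_simplify; lra).
  assert (HUb : beta * U = (1 + beta) / 2) by (unfold U; field; lra).
  destruct (Zq_pt W Hc2 q 0 (Rmin (U - 1) 1)) as [d1 [Hd1 P1]].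
  { apply Rmin_glb_lt; lra. }
  destruct (Hc1 b ltac:(lra) ((1 - beta) / 2 * WW b)) as [d2 [Hd2 P2]].
  { apply Rmult_lt_0_compat; lra. }
  set (h := Rmin (Rmin (d1/2) (d2/2)) (b/2)).
  assert (Hh0 : 0 < h) by (unfold h; repeat apply Rmin_glb_lt; lra).
  assert (Hhd1 : h < d1) by (unfold h; assert (H := Rmin_l (Rmin (d1/2) (d2/2)) (b/2)); assert (H' := Rmin_l (d1/2) (d2/2)); lra).
  assert (Hhd2 : h < d2) by (unfold h; assert (H := Rmin_l (Rmin (d1/2) (d2/2)) (b/2)); assert (H' := Rmin_r (d1/2) (d2/2)); lra).
  assert (Hhb : h < b) by (unfold h; assert (H := Rmin_r (Rmin (d1/2) (d2/2)) (b/2)); lra).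
  set (Fp := fun y => fp WW (b - y) * Z y).
  assert (HFp : forall y, continuity_pt Fp y).
  { intros y. unfold Fp. apply continuity_pt_mult; [|apply (Zq_pt W Hc2)].
    apply (continuity_pt_comp (fun y => b - y) (fp WW)); [|apply (fp_pt WW Hc1)].
    apply continuity_pt_minus; [apply continuity_pt_const; intros ? ?; auto|apply continuity_pt_id]. }
  set (I1 := RInt (fp WW) (b - h) b).
  set (I2 := RInt Fp 0 h).
  assert (EG : Gamma q delta beta rho dX WW W (b - h) b - Gamma q delta beta rho dX WW W b b
               = - delta * q * I1 + q * beta * delta * I2).
  { unfold Gamma, rt_c. replace (b - (b - h)) with h by ring. replace (b - b) with 0 by ring.
    rewrite (integ_ext_cont _ Fp h b HFp).
    2:{ intros y Hy. rewrite Rmin_left, Rmax_right in Hy by lra. unfold Fp. rewrite fp_eq by lra. reflexivity. }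
    rewrite (integ_ext_cont _ Fp 0 b HFp).
    2:{ intros y Hy. rewrite Rmin_left, Rmax_right in Hy by lra. unfold Fp. rewrite fp_eq by lra. reflexivity. }
    rewrite (Chasles3' Fp 0 h b) by (intros; apply exRInt_pt; auto).
    assert (EZ := Zq_diff WW Hc1 q (b - h) b ltac:(lra) ltac:(lra)).
    rewrite <- (opp_RInt_swapR (fp WW)) in EZ by apply (exRInt_fp WW Hc1).
    change (Zq q WW (b - h) - Zq q WW b = q * - I1) in EZ.
    fold I2. replace (Zq q WW (b - h)) with (Zq q WW b + q * - I1) by lra. ring. }
  assert (B1 : (b - (b - h)) * WW (b - h) <= I1).
  { apply RInt_le_const_low; [lra|apply (exRInt_fp WW Hc1)|].
    intros x Hx. rewrite fp_eq by lra. apply (f_mono WW Hi1); lra. }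
  assert (B2 : I2 <= (h - 0) * (WW b * U)).
  { apply RInt_le_const_up; [lra|apply exRInt_pt; auto|].
    intros y Hy. unfold Fp. rewrite fp_eq by lra.
    assert (HW1 : WW (b - y) <= WW b) by (apply (f_mono WW Hi1); lra).
    assert (HW2 : 0 <= WW (b - y)) by (assert (WW 0 <= WW (b - y)) by (apply (f_mono WW Hi1); lra); lra).
    assert (HZ : Rabs (Z y - Z 0) < Rmin (U - 1) 1).
    { apply P1. split; [unfold D_x, no_cond; split; auto; lra|].
      simpl; unfold R_dist. rewrite Rminus_0_r, Rabs_pos_eq; lra. }
    assert (Z0 : Z 0 = 1) by apply Zq0. change (Rabs (Z y - Z 0) < Rmin (U - 1) 1) in HZ. rewrite Z0 in HZ.
    assert (Rmin (U - 1) 1 <= U - 1) by apply Rmin_l.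
    assert (Rmin (U - 1) 1 <= 1) by apply Rmin_r.
    apply Rabs_def2 in HZ.
    apply Rmult_le_compat; lra. }
  assert (B3 : WW b * (1 + beta) / 2 < WW (b - h)).
  { assert (HP := P2 (b - h)). simpl in HP. unfold R_dist in HP.
    assert (Hr : Rabs (WW (b - h) - WW b) < (1 - beta) / 2 * WW b).
    { apply HP. split; [lra|]. replace (b - h - b) with (- h) by ring. rewrite Rabs_Ropp, Rabs_pos_eq; lra. }
    apply Rabs_def2 in Hr. lra. }
  assert (Hle : Gamma q delta beta rho dX WW W (b - h) b <= Gamma q delta beta rho dX WW W b b).
  { assert (beta * I2 <= h * WW b * ((1 + beta) / 2)).
    { rewrite <- HUb. replace (h * WW b * (beta * U)) with (beta * ((h - 0) * (WW b * U))) by ring.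
      apply Rmult_le_compat_l; lra. }
    assert (h * WW b * ((1 + beta) / 2) <= I1).
    { replace (b - (b - h)) with h in B1 by ring. nra. }
    assert (beta * I2 - I1 <= 0) by lra.
    assert (q * delta * (beta * I2 - I1) <= 0).
    { assert (0 < q * delta) by (apply Rmult_lt_0_compat; lra). nra. }
    lra. }
  assert (Hge := Hmin (b - h) ltac:(lra)).
  assert (Heq := Huniq (b - h) ltac:(lra) ltac:(lra)). lra.
Qed.

End Main.

Theorem mainTheorem5
  (q delta beta rho : R) (psiY : R -> R) (dY : R) (WW W : R -> R)
  (v : R -> R -> R -> R) (astar bstar : R)
  (Hq : 0 < q) (Hdelta : 0 < delta) (Hbeta : 0 < beta < 1)
  (HpsiY0 : psiY 0 = 0)
  (HdY : limit1_in (fun h => (psiY h - psiY 0) / h) (fun h => 0 < h) dY 0)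
  (HWW : is_scale_function psiY q WW)
  (HW : is_scale_function (fun th => psiY th + delta * th) q W)
  (Hv : forall a b x, 0 <= a < b -> 0 <= x ->
        v a b x = v_formula q delta beta rho (dY + delta) WW W a b x)
  (Hv00 : forall x, 0 <= x -> v 0 0 x = beta * x + rho)
  (Hsel : selected_pair q delta beta rho (dY + delta) WW W astar bstar) :
  (0 < bstar ->
     (forall x, 0 <= x ->
        v astar bstar x = (delta / q) * Zq q WW (astar - x)
                          - beta * rt_c q delta (dY + delta) WW W (bstar - astar) (bstar - x)) /\
     (forall x, astar <= x ->
        v astar bstar x = delta / q - beta * Rq q (dY + delta) W (bstar - x)) /\
     (forall x, bstar <= x ->
        v astar bstar x = beta * (x - bstar - (dY + delta) / q) + delta / q)) /\
  (astar = 0 /\ bstar = 0 -> forall x, 0 <= x -> v astar bstar x = beta * x + rho) /\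
  limit1_in (v astar bstar) (fun x => 0 < x) rho 0 /\
  v astar bstar 0 = rho.
Proof.
  destruct HWW as [Hn1 [Hc1 [Hi1 HL1]]].
  destruct HW as [Hn2 [Hc2 [Hi2 HL2]]].
  assert (HW0 : 0 <= WW 0) by (apply (f0_nonneg WW Hc1 Hi1 psiY q HL1)).
  set (dX := dY + delta) in *.
  destruct Hsel as [[HG [-> ->]] | [HG0 [Hb [Hab [HG [Hmin Huniq]]]]]].
  - split; [intros H; lra|].
    split; [intros _ x Hx; apply Hv00; auto|].
    split.
    + intros eps He. exists eps. split; [lra|]. intros x [Hx Hd]. simpl in *. unfold R_dist in *.
      rewrite Rminus_0_r, Rabs_pos_eq in Hd by lra. rewrite Hv00 by lra.
      replace (beta * x + rho - rho) with (beta * x) by ring. rewrite Rabs_pos_eq by nra. nra.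
    + rewrite Hv00 by lra. ring.
  - assert (Hlt : astar < bstar).
    { destruct Hab as [Ha0 [Hab|Hab]]; auto. exfalso. subst astar.
      apply (not_eq_ab q WW W Hq Hc1 Hi1 Hc2 delta beta rho dX bstar); auto. }
    assert (Hv1 : forall x, 0 <= x -> v astar bstar x = delta / q * Zq q WW (astar - x)
                 - beta * rt_c q delta dX WW W (bstar - astar) (bstar - x)).
    { intros x Hx. rewrite Hv by lra. unfold v_formula. rewrite HG. unfold Rdiv. ring. }
    assert (H2 : forall x, astar <= x -> v astar bstar x = delta / q - beta * Rq q dX W (bstar - x)).
    { intros x Hx. rewrite Hv1 by lra. unfold rt_c.
      rewrite (conv_zero WW (Zq q W) (bstar - x) (bstar - astar)) by (auto; lra).
      assert (Z1 : Zq q WW (astar - x) = 1) by (unfold Zq; destruct (Rle_dec (astar - x) 0); lra).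
      rewrite Z1. ring. }
    split.
    { intros _. split; [exact Hv1|]. split; [exact H2|].
      intros x Hx. rewrite H2 by lra. unfold Rq, Zbarq.
      destruct (Rle_dec (bstar - x) 0); [|lra]. unfold Rdiv. ring. }
    split; [intros [Ha Hb0]; lra|].
    assert (Hv0 : v astar bstar 0 = rho).
    { rewrite Hv1 by lra. unfold Gamma in HG. replace (astar - 0) with astar by ring.
      replace (bstar - 0) with bstar by ring.
      set (X := Zq q WW astar) in *. set (Y := rt_c q delta dX WW W (bstar - astar) bstar) in *.
      apply (Rmult_eq_reg_l q); [|lra].
      replace (q * (delta / q * X - beta * Y)) with (delta * X - q * beta * Y) by (field; lra). lra. }
    split; [|exact Hv0].
    set (F := fun x => delta / q * Zq q WW (astar - x) - beta * rt_c q delta dX WW W (bstar - astar) (bstar - x)).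
    assert (rc1 : rc (fun x => Zq q WW (astar - x))).
    { apply rc_pt. apply (continuity_pt_comp (fun x => astar - x) (Zq q WW)).
      - apply continuity_pt_minus; [apply continuity_pt_const; intros ? ?; auto|apply continuity_pt_id].
      - apply (Zq_pt WW Hc1). }
    assert (rc2 : rc (fun x => Zbarq q W (bstar - x))).
    { apply (rc_ext _ (fun x => RInt (Zq q W) 0 (bstar - x))).
      - exists bstar. split; auto. intros x Hx. unfold Zbarq.
        destruct (Rle_dec (bstar - x) 0); [lra|]. apply integ_RInt.
        apply exRInt_pt. apply (Zq_pt W Hc2).
      - apply rc_pt. apply (continuity_pt_comp (fun x => bstar - x) (fun s => RInt (Zq q W) 0 s)).
        + apply continuity_pt_minus; [apply continuity_pt_const; intros ? ?; auto|apply continuity_pt_id].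
        + apply prim_pt_g. apply (Zq_pt W Hc2). }
    assert (rc3 : rc (fun x => integ (fun y => WW (bstar - x - y) * Zq q W y) (bstar - astar) (bstar - x))).
    { destruct Hab as [[Ha0|Ha0] _].
      - apply (P3_rc q WW W Hq Hc1 Hi1 Hc2 Hi2). lra.
      - apply (rc_ext _ (fun _ => 0)); [|apply rc_const].
        exists 1. split; [lra|]. intros x Hx.
        apply (conv_zero WW (Zq q W) (bstar - x) (bstar - astar)); auto; lra. }
    assert (rcF : rc F).
    { apply (rc_ext _ (fun x => (delta / q) * Zq q WW (astar - x) + (- beta) *
         (Zbarq q W (bstar - x) + (dX / q + delta * integ (fun y => WW (bstar - x - y) * Zq q W y) (bstar - astar) (bstar - x))))).
      { exists 1. split; [lra|]. intros x Hx. unfold F, rt_c, Rq. ring. }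
      apply (rc_plus (fun x => (delta / q) * Zq q WW (astar - x))
                     (fun x => (- beta) * (Zbarq q W (bstar - x) + (dX / q + delta * integ (fun y => WW (bstar - x - y) * Zq q W y) (bstar - astar) (bstar - x))))).
      - apply (rc_scal _ (fun x => Zq q WW (astar - x))). exact rc1.
      - apply (rc_scal _ (fun x => Zbarq q W (bstar - x) + (dX / q + delta * integ (fun y => WW (bstar - x - y) * Zq q W y) (bstar - astar) (bstar - x)))).
        apply (rc_plus (fun x => Zbarq q W (bstar - x)) (fun x => dX / q + delta * integ (fun y => WW (bstar - x - y) * Zq q W y) (bstar - astar) (bstar - x))); [exact rc2|].
        apply (rc_plus (fun _ => dX / q) (fun x => delta * integ (fun y => WW (bstar - x - y) * Zq q W y) (bstar - astar) (bstar - x))); [apply rc_const|].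
        apply (rc_scal _ (fun x => integ (fun y => WW (bstar - x - y) * Zq q W y) (bstar - astar) (bstar - x))). exact rc3. }
    assert (F0 : F 0 = rho) by (unfold F; rewrite <- Hv0; symmetry; apply Hv1; lra).
    intros eps He. destruct (rcF eps He) as [d [Hd P]]. exists d. split; [lra|].
    intros x [Hx Hdx]. simpl in *. unfold R_dist in *.
    rewrite Rminus_0_r, Rabs_pos_eq in Hdx by lra.
    rewrite Hv1 by lra. rewrite <- F0. apply (P x). lra.
Qed.
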